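(* Let $(\vartheta,\mathbb{P})$ be an arbitrary mutation law over $\mathcal{A}=\{a_0,\dots,a_{d-1}\}$, let $k\in\mathbb{N}$, and let $w$ be a word with $|w|\ge k$. Then \[\mathbb{E}\big[\mathbf{ct}^{(k)}_{\vartheta(w)}\big]=\frac{1}{|w|}\Big(\mathbf{M}^{(k)}+(|w|-k)\mathbf{I}\Big)\cdot\mathbf{ct}^{(k)}_w,\] where $\vartheta(w)$ is the result of a single mutation step applied to $w$.
   Context: Let $\mathcal{A}=\{a_0,\dots,a_{d-1}\}$ be a finite alphabet and $\mathcal{A}^\star$ the set of finite nonempty words. A mutation law assigns to each $a_t$ a finitely supported probability distribution $\mathbb{P}_{a_t}$ on $\mathcal{A}^\star$; $\vartheta(a_t)$ denotes a random word with law $\mathbb{P}_{a_t}$. A mutation step applied to $w=w_0\cdots w_{m-1}$ chooses $i\in\{0,\dots,m-1\}$ uniformly at random and replaces $w_i$ by an independent random word with law $\mathbb{P}_{w_i}$, giving $\vartheta(w)$. For words $u,v$ with $|u|\le|v|$, $\mathrm{ct}_v(u)$ is the number of $i\in\{0,\dots,|v|-1\}$ with $v_i\cdots v_{i+|u|-1}=u$, indices cyclic modulo $|v|$; $\mathbf{ct}^{(k)}_v=(\mathrm{ct}_v(u))_{u\in\mathcal{A}^k}\in\mathbb{R}^{d^k}$. The $k$-substitution matrix $\mathbf{M}^{(k)}$ is the $d^k\times d^k$ matrix indexed by $\mathcal{A}^k$ with, for $u,v\in\mathcal{A}^k$, $v=v_0\cdots v_{k-1}$, \[\mathbf{M}^{(k)}_{u,v}=\sum_{l\ge1}\sum_{\eta\in\mathcal{A}^l}\sum_{t\in[d]}\Pr(\vartheta(a_t)=\eta)\Big(\sum_{j=1}^{k-1}\mathbb{1}[v_j=a_t]\,\mathbb{1}\big[(v_0\cdots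 v_{j-1}\,\eta\,v_{j+1}\cdots v_{k-1})_{[k]}=u\big]+\sum_{j=0}^{l-1}\mathbb{1}[v_0=a_t]\,\mathbb{1}\big[(\eta\,v_1\cdots v_{k-1})_{j+[k]}=u\big]\Big),\] where for a word $x$, $x_{j+[k]}=x_jx_{j+1}\cdots x_{j+k-1}$ and $x_{[k]}$ is its first $k$ symbols. *)

(* Defs.v *)
From mathcomp Require Import all_boot all_order all_algebra.
Set Implicit Arguments. Unset Strict Implicit. Unset Printing Implicit Defensive.
Import Order.TTheory GRing.Theory Num.Theory.
Local Open Scope ring_scope.

(* A mutation law is given by, for each letter a, a finite support list
   [supp a] of words and weights [p a eta]; Pr(theta(a) = eta) is
   [mut_prob supp p a eta]. *)

Definition mutation_law (R : realFieldType) (d : nat)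
  (supp : 'I_d -> seq (seq 'I_d)) (p : 'I_d -> seq 'I_d -> R) : Prop :=
  [/\ forall a, uniq (supp a),
      forall a eta, eta \in supp a -> (0 < size eta)%N,
      forall a eta, eta \in supp a -> 0 <= p a eta
    & forall a, \sum_(eta <- supp a) p a eta = 1].

Definition mut_prob (R : realFieldType) (d : nat)
  (supp : 'I_d -> seq (seq 'I_d)) (p : 'I_d -> seq 'I_d -> R)
  (a : 'I_d) (eta : seq 'I_d) : R :=
  if eta \in supp a then p a eta else 0.

(* ct_v(u): number of i in [0, |v|) with v_i ... v_(i+|u|-1) = u, indices
   cyclic modulo |v| (meaningful for |u| <= |v|). *)
Definition ct (T : eqType) (u v : seq T) : nat :=
  count (fun i => take (size u) (rot i v) == u) (iota 0 (size v)).

Definition replace_at (T : Type) (w : seq T) (i : nat) (eta : seq T) : seq T :=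
  take i w ++ eta ++ drop i.+1 w.

(* E[ ct_{theta(w)}(u) ] for a single mutation step: position i uniform
   in [0,|w|), then w_i replaced by an independent theta(w_i). *)
Definition expected_ct (R : realFieldType) (d : nat)
  (supp : 'I_d -> seq (seq 'I_d)) (p : 'I_d -> seq 'I_d -> R)
  (w : seq 'I_d) (u : seq 'I_d) : R :=
  (size w)%:R^-1 *
  \sum_(i < size w)
     \sum_(eta <- supp (tnth (in_tuple w) i))
        mut_prob supp p (tnth (in_tuple w) i) eta
        * (ct u (replace_at w i eta))%:R.

(* The sum over
   all l >= 1 and eta in A^l is a sum over the (finite) support, outside of
   which Pr(theta(a_t) = eta) = 0.  [nth t v j == t] is v_j = a_t (j < k). *)
Definition subst_matrix (R : realFieldType) (d : nat)
  (supp : 'I_d -> seq (seq 'I_d)) (p : 'I_d -> seq 'I_d -> R)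
  (k : nat) (u v : k.-tuple 'I_d) : R :=
  \sum_(t < d) \sum_(eta <- supp t)
     mut_prob supp p t eta *
     ( (\sum_(1 <= j < k)
          ((nth t v j == t) &&
           (take k (take j v ++ eta ++ drop j.+1 v) == u))%:R)
     + (\sum_(0 <= j < size eta)
          ((nth t v 0 == t) &&
           (take k (drop j (eta ++ behead v)) == u))%:R) ).

(* Main.v *)
Require Import Defs.
From mathcomp Require Import all_boot all_order all_algebra zify ring.
Import Order.TTheory GRing.Theory Num.Theory.
Set Implicit Arguments. Unset Strict Implicit. Unset Printing Implicit Defensive.


Lemma count_sum (T : Type) (a : pred T) (s : seq T) :
  count a s = \sum_(x <- s) (a x : nat).
Proof. by elim: s => [|x s IH]; rewrite ?big_nil ?big_cons //= IH. Qed.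

Lemma ct_sum (T : eqType) (u v : seq T) :
  ct u v = \sum_(i < size v) (take (size u) (rot i v) == u : nat).
Proof. rewrite /ct count_sum. have ->: iota 0 (size v) = index_iota 0 (size v) by rewrite /index_iota subn0.
by rewrite big_mkord. Qed.

Lemma reindex_mod (R : Type) (idx : R) (op : Monoid.com_law idx) N c (F : nat -> R) :
  (0 < N)%N -> \big[op/idx]_(i < N) F ((i + c) %% N) = \big[op/idx]_(i < N) F i.
Proof.
case: N => [//|N] _.
rewrite [RHS](reindex_inj (addIr (inZp c : 'I_N.+1))) /=.
by apply: eq_bigr => i _; rewrite /= modnDmr.
Qed.

Lemma rotrot (T : Type) (v : seq T) a b :
  (0 < size v)%N -> (a <= size v)%N -> (b <= size v)%N ->
  rot a (rot b v) = rot ((a + b) %% size v) v.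
Proof.
move=> v0 av bv; rewrite rot_add_mod //.
case: ifP => H.
  case: (ltngtP (a + b) (size v)) => H2; last first.
  - by rewrite H2 modnn rot0 rot_size.
  - lia.
  by rewrite modn_small.
have E: (a + b = (a + b - size v) + size v)%N by lia.
rewrite {2}E modnDr.
case: (ltngtP (a + b - size v) (size v)) => H2.
- by rewrite modn_small.
- lia.
- by rewrite H2 modnn rot0 rot_size.
Qed.

Lemma ct_rot (T : eqType) (u v : seq T) r :
  (r <= size v)%N -> ct u (rot r v) = ct u v.
Proof.
move=> rv; rewrite !ct_sum size_rot.
case: (posnP (size v)) => [->|v0]; first by rewrite !big_ord0.
rewrite -(@reindex_mod _ _ _ (size v) r (fun i => (take (size u) (rot i v) == u : nat)) v0).
by apply: eq_bigr => i _; rewrite rotrot //; apply: ltnW.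
Qed.

Lemma take_catE (T : Type) k (a b : seq T) :
  take k (a ++ b) = take k a ++ take (k - size a) b.
Proof.
rewrite take_cat; case: ltnP => H.
  have ->: (k - size a = 0)%N by lia.
  by rewrite take0 cats0.
by rewrite (take_oversize H).
Qed.

Lemma take_behead_take (T : Type) a b (x : seq T) :
  (a <= b.-1)%N -> take a (behead (take b x)) = take a (behead x).
Proof.
case: x => [|y x] //=; case: b => [|b] /=.
  move=> H; have -> : a = 0%N by lia.
  by rewrite !take0.
by move=> H; rewrite take_takel.
Qed.

Lemma nth_rot (T : Type) (x0 : T) (w : seq T) s j :
  (s < size w)%N -> (j < size w)%N ->
  nth x0 (rot s w) j = nth x0 w ((s + j) %% size w).
Proof.
move=> sw jw; rewrite /rot nth_cat size_drop; case: ltnP => H.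
  by rewrite nth_drop modn_small //; lia.
rewrite nth_take; last by lia.
have E: (s + j = (j - (size w - s)) + size w)%N by lia.
by rewrite E modnDr modn_small //; lia.
Qed.


Lemma count_rev (g : nat -> bool) a b :
  count (fun r => g (a + b - r)) (iota a b) = \sum_(1 <= j < b.+1) (g j : nat).
Proof.
elim: b a => [|b IH] a; first by rewrite big_geq.
rewrite /= (eq_count (a2 := fun r => g (a.+1 + b - r))); last first.
  by move=> r; rewrite addnS addSn.
rewrite IH [RHS]big_nat_recr //= addnC.
by have ->: (a + b.+1 - a = b.+1)%N by lia.
Qed.


Lemma piece1 (T : eqType) (x eta : seq T) (k : nat) (k0 : (0 < k)%N) (kx : (k <= size x)%N) (e0 : (0 < size eta)%N) j : (j < size eta)%N ->
  take k (rot j (eta ++ behead x)) = take k (drop j (eta ++ behead (take k x))).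
Proof.
move=> jm.
rewrite /rot take_catE size_drop size_cat size_behead.
have ->: (k - (size eta + (size x).-1 - j) = 0)%N by lia.
rewrite take0 cats0 !drop_cat jm !take_catE.
congr (_ ++ _); rewrite take_behead_take // size_drop; lia.
Qed.

Lemma piece2 (T : eqType) (x eta : seq T) (k : nat) (k0 : (0 < k)%N) (kx : (k <= size x)%N) (e0 : (0 < size eta)%N) s : (s < size x - k)%N ->
  take k (rot (size eta + s) (eta ++ behead x)) = take k (rot s.+1 x).
Proof.
move=> sk.
rewrite /rot !take_catE !size_drop size_cat size_behead.
have ->: (k - (size eta + (size x).-1 - (size eta + s)) = 0)%N by lia.
have ->: (k - (size x - s.+1) = 0)%N by lia.
rewrite !take0 !cats0 drop_cat.
have ->: (size eta + s < size eta)%N = false by lia.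
rewrite -drop1 drop_drop.
by have ->: (size eta + s - size eta + 1 = s.+1)%N by lia.
Qed.

Lemma piece3 (T : eqType) (x eta : seq T) (k : nat) (k0 : (0 < k)%N) (kx : (k <= size x)%N) (e0 : (0 < size eta)%N) j : (1 <= j)%N -> (j < k)%N ->
  let V := take k (rot (size x - j) x) in
  take k (rot (size eta + (size x).-1 - j) (eta ++ behead x)) =
  take k (take j V ++ eta ++ drop j.+1 V).
Proof.
move=> j1 jk V.
set n := size x; set m := size eta.
have E1 : drop (m + n.-1 - j) (eta ++ behead x) = drop (n - j) x.
  rewrite drop_cat.
  have ->: (m + n.-1 - j < size eta)%N = false by rewrite /m; lia.
  rewrite -drop1 drop_drop /m.
  by have ->: (size eta + n.-1 - j - size eta + 1 = n - j)%N by lia.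
have E2 : take (m + n.-1 - j) (eta ++ behead x) = eta ++ take (n.-1 - j) (behead x).
  rewrite take_cat.
  have ->: (m + n.-1 - j < size eta)%N = false by rewrite /m; lia.
  by have ->: (m + n.-1 - j - size eta = n.-1 - j)%N by rewrite /m; lia.
have SD : size (drop (n - j) x) = j by rewrite size_drop /n; lia.
have E3 : V = drop (n - j) x ++ take (k - j) x.
  rewrite /V /rot take_catE SD take_oversize ?SD 1?ltnW //.
  by rewrite take_takel //; rewrite /n; lia.
rewrite /rot E1 E2 E3 (take_size_cat _ SD) drop_cat SD ltnNge leqnSn /=.
have ->: (j.+1 - j = 1)%N by lia.
rewrite drop1 !take_catE SD; congr (_ ++ _); congr (_ ++ _).
rewrite take_takel; last by rewrite /n /m; lia.
by rewrite take_behead_take //; rewrite /m; lia.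
Qed.

Lemma core (T : eqType) (x eta : seq T) (k : nat) (k0 : (0 < k)%N) (kx : (k <= size x)%N) (e0 : (0 < size eta)%N) (u : seq T) : size u = k ->
  ct u (eta ++ behead x) =
   (\sum_(0 <= j < size eta) (take k (drop j (eta ++ behead (take k x))) == u : nat)
   + count (fun s => take k (rot s.+1 x) == u) (iota 0 (size x - k))
   + \sum_(1 <= j < k) (take k (take j (take k (rot (size x - j) x)) ++ eta
          ++ drop j.+1 (take k (rot (size x - j) x))) == u : nat))%N.
Proof.
move=> Hu; rewrite /ct Hu size_cat size_behead.
have HL: (size eta + (size x).-1 = size eta + ((size x - k) + (k - 1)))%N by lia.
rewrite HL iotaD iotaD count_cat count_cat add0n addnA.
congr (_ + _ + _).
- rewrite count_sum /index_iota subn0 !big_seq; apply: eq_bigr => j.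
  by rewrite mem_iota add0n => /andP[_ Hj]; rewrite piece1.
- rewrite -{1}(addn0 (size eta)) iotaDl count_map; apply: eq_in_count => s.
  by rewrite mem_iota add0n => /andP[_ Hs] /=; rewrite piece2.
- have Kb : k = (k - 1).+1 by lia.
  rewrite [in RHS]Kb -(count_rev _ (size eta + (size x - k))); apply: eq_in_count => r.
  rewrite mem_iota => /andP[H1 H2] /=.
  rewrite -Kb.
  have Er : r = (size eta + (size x).-1 - (size eta + (size x - k) + (k - 1) - r))%N.
    move: H1 H2 kx k0; clear; lia.
  rewrite {1}Er piece3 //; move: H1 H2 kx k0; clear; lia.
Qed.

Local Open Scope ring_scope.

Definition Bn (T : eqType) k (u x eta : seq T) : nat :=
  \sum_(0 <= j < size eta) (take k (drop j (eta ++ behead (take k x))) == u : nat).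
Definition Cn (T : eqType) k (u x : seq T) : nat :=
  count (fun s => take k (rot s.+1 x) == u) (iota 0 (size x - k)).
Definition Aj (T : eqType) k (u x eta : seq T) j : bool :=
  take k (take j (take k (rot (size x - j) x)) ++ eta
     ++ drop j.+1 (take k (rot (size x - j) x))) == u.
Definition An (T : eqType) k (u x eta : seq T) : nat :=
  \sum_(1 <= j < k) (Aj k u x eta j : nat).

Lemma core' (T : eqType) (x eta : seq T) k (u : seq T) :
  (0 < k)%N -> (k <= size x)%N -> (0 < size eta)%N -> size u = k ->
  ct u (eta ++ behead x) = (Bn k u x eta + Cn k u x + An k u x eta)%N.
Proof. move=> *; exact: core. Qed.

Lemma repl_rot (T : Type) (w eta : seq T) i : (i < size w)%N ->
  rot i (replace_at w i eta) = eta ++ behead (rot i w).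
Proof.
move=> iw; rewrite /replace_at /rot.
have St : size (take i w) = i by rewrite size_takel // ltnW.
rewrite (drop_size_cat _ St) (take_size_cat _ St).
have ->: drop i.+1 w = behead (drop i w) by rewrite -drop1 drop_drop add1n.
case E: (drop i w) => [|y z] /=.
  by move: (congr1 size E); rewrite size_drop /=; lia.
by rewrite -catA.
Qed.

Lemma pick_sum (R : realFieldType) d (supp : 'I_d -> seq (seq 'I_d))
  (f : 'I_d -> seq 'I_d -> R) (G : seq 'I_d -> R) c :
  \sum_(t < d) \sum_(eta <- supp t) f t eta * ((c == t)%:R * G eta)
  = \sum_(eta <- supp c) f c eta * G eta.
Proof.
rewrite (bigD1 c) //= [X in _ + X]big1 ?addr0.
  by apply: eq_bigr => eta _; rewrite eqxx mul1r.
move=> t Ht; apply: big1 => eta _.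
by rewrite eq_sym (negbTE Ht) mul0r mulr0.
Qed.


Theorem mainTheorem5 (R : realFieldType) (d : nat)
  (supp : 'I_d -> seq (seq 'I_d)) (p : 'I_d -> seq 'I_d -> R)
  (k : nat) (w : seq 'I_d) :
  mutation_law supp p -> (0 < k)%N -> (k <= size w)%N ->
  forall u : k.-tuple 'I_d,
    expected_ct supp p w u =
    (size w)%:R^-1 *
      (\sum_(v : k.-tuple 'I_d) subst_matrix supp p u v * (ct v w)%:R
       + (size w - k)%:R * (ct u w)%:R).
Proof.
move=> [Huniq Hpos Hp0 Hsum] k0 kw u.
have n0 : (0 < size w)%N by apply: leq_trans kw.
have d0 : (0 < d)%N.
  by move: n0; case: w {kw} => [|a w'] //= _; exact: (leq_ltn_trans (leq0n a) (ltn_ord a)).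
pose x0 := Ordinal d0.
have Hu : size u = k by rewrite size_tuple.
have Psum : forall a, \sum_(eta <- supp a) mut_prob supp p a eta = 1.
  move=> a; rewrite -(Hsum a) !big_seq; apply: eq_bigr => eta He.
  by rewrite /mut_prob He.
have LHS : expected_ct supp p w u = (size w)%:R^-1 *
   \sum_(i < size w) \sum_(eta <- supp (nth x0 w i)) mut_prob supp p (nth x0 w i) eta
      * (Bn k u (rot i w) eta + Cn k u (rot i w) + An k u (rot i w) eta)%:R.
  rewrite /expected_ct; congr (_ * _); apply: eq_bigr => i _.
  rewrite (tnth_nth x0) /= !big_seq; apply: eq_bigr => eta He.
  congr (_ * _%:R).
  rewrite -(@ct_rot _ _ _ i); last first.
    by rewrite /replace_at !size_cat size_takel ?leq_addr // ltnW.
  by rewrite repl_rot // (@core' _ _ _ k) ?size_rot //; exact: Hpos He.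
have SC : \sum_(i < size w) \sum_(eta <- supp (nth x0 w i)) mut_prob supp p (nth x0 w i) eta
      * (Cn k u (rot i w))%:R = ((size w - k) * ct u w)%:R.
  under eq_bigr do rewrite -mulr_suml Psum mul1r.
  rewrite -natr_sum; congr (_%:R).
  rewrite /Cn.
  under eq_bigr do rewrite size_rot count_sum.
  rewrite exchange_big /=.
  have ->: ((size w - k) * ct u w = \sum_(0 <= s < size w - k) ct u w)%N.
    by rewrite sum_nat_const_nat subn0.
  have ->: iota 0 (size w - k) = index_iota 0 (size w - k) by rewrite /index_iota subn0.
  rewrite big_seq [RHS]big_seq; apply: eq_bigr => s; rewrite mem_index_iota => /andP[_ Hs].
  rewrite ct_sum Hu.
  rewrite -(@reindex_mod _ _ _ (size w) s.+1 (fun i => (take k (rot i w) == u : nat)) n0).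
  apply: eq_bigr => i _; rewrite rotrot // ?(addnC s.+1) //; [lia | exact: ltnW].
have RHS1 : \sum_(v : k.-tuple 'I_d) subst_matrix supp p u v * (ct v w)%:R
   = \sum_(s < size w) subst_matrix supp p u (insubd u (take k (rot s w))).
  under eq_bigr do rewrite ct_sum size_tuple natr_sum mulr_sumr.
  rewrite exchange_big /=; apply: eq_bigr => s _.
  have Ss : size (take k (rot s w)) == k by rewrite size_takel ?size_rot.
  rewrite (bigD1 (insubd u (take k (rot s w)))) //= insubdK // eqxx mulr1.
  rewrite [X in _ + X]big1 ?addr0 // => v Hv.
  case: eqP => [E|_]; last by rewrite mulr0.
  by move: Hv; rewrite E valKd eqxx.
have RHS2 : forall s : 'I_(size w), subst_matrix supp p u (insubd u (take k (rot s w))) =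
  \sum_(1 <= j < k) \sum_(eta <- supp (nth x0 w ((s + j) %% size w)))
       mut_prob supp p (nth x0 w ((s + j) %% size w)) eta
       * (Aj k u (rot ((s + j) %% size w) w) eta j)%:R
  + \sum_(eta <- supp (nth x0 w s)) mut_prob supp p (nth x0 w s) eta * (Bn k u (rot s w) eta)%:R.
  move=> s.
  have Ss : size (take k (rot s w)) == k by rewrite size_takel ?size_rot.
  have Vs : tval (insubd u (take k (rot s w))) = take k (rot s w) := insubdK u Ss.
  rewrite /subst_matrix Vs.
  have EB : forall (t : 'I_d) eta,
    (\sum_(0 <= j < size eta) ((nth t (take k (rot s w)) 0 == t) &&
        (take k (drop j (eta ++ behead (take k (rot s w)))) == u))%:R : R)
    = (nth x0 w s == t)%:R * (Bn k u (rot s w) eta)%:R.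
    move=> t eta; rewrite /Bn natr_sum mulr_sumr; apply: eq_bigr => j _.
    rewrite -mulnb natrM nth_take // nth_rot // addn0 modn_small //.
    by rewrite (set_nth_default x0).
  have EA : forall (t : 'I_d) eta,
    (\sum_(1 <= j < k) ((nth t (take k (rot s w)) j == t) &&
       (take k (take j (take k (rot s w)) ++ eta ++ drop j.+1 (take k (rot s w))) == u))%:R : R)
    = \sum_(1 <= j < k) (nth x0 w ((s + j) %% size w) == t)%:R
         * (Aj k u (rot ((s + j) %% size w) w) eta j)%:R.
    move=> t eta; apply: eq_big_nat => j /andP[j1 jk].
    rewrite -mulnb natrM nth_take // nth_rot //; last by lia.
    rewrite (set_nth_default x0); last by rewrite ltn_mod.
    congr (_ * _%:R); rewrite /Aj size_rot rotrot ?size_rot //; last first.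
    - by apply: ltnW; rewrite ltn_mod.
    - by lia.
    have ->: ((size w - j + (s + j) %% size w) %% size w = s)%N.
      rewrite modnDmr.
      have ->: (size w - j + (s + j) = s + size w)%N by lia.
      by rewrite modnDr modn_small.
    by [].
  under eq_bigr => t _ do under eq_bigr => eta _ do rewrite EA EB mulrDr mulr_sumr.
  under eq_bigr do rewrite big_split /=.
  rewrite big_split /=; congr (_ + _); last exact: pick_sum.
  under eq_bigr do rewrite exchange_big /=.
  rewrite exchange_big /=; apply: eq_bigr => j _.
  exact: pick_sum.
rewrite LHS RHS1 (eq_bigr _ (fun s _ => RHS2 s)) big_split /= exchange_big /=.
under [X in _ = _ * (X + _ + _)]eq_bigr => j _ do
  rewrite (@reindex_mod _ _ _ (size w) j (fun i => \sum_(eta <- supp (nth x0 w i))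
     mut_prob supp p (nth x0 w i) eta * (Aj k u (rot i w) eta j)%:R) n0).
under eq_bigr do under eq_bigr do rewrite !natrD !mulrDr.
under eq_bigr do rewrite !big_split /=.
rewrite !big_split /= SC natrM.
rewrite /An.
under [X in _ * (_ + _ + X) = _]eq_bigr do under eq_bigr do rewrite natr_sum mulr_sumr.
under [X in _ * (_ + _ + X) = _]eq_bigr do rewrite exchange_big /=.
rewrite [X in _ * (_ + _ + X) = _]exchange_big /=.
ring.
Qed.
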